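(* Let $u_0\in H^1(\mathbb S)$ with $h=\int_{\mathbb S}u_{0x}^2\neq1$, and let $u$ be a global admissible conservative weak solution with initial datum $u_0$ (defined below). For each $t\ge0$ and $\beta\in\mathbb R$, define $y(t,\beta)$ implicitly by $$y(t,\beta)+\int_0^{y(t,\beta)}u_x^2(t,z)\,dz=(1+h)\beta.$$ Then, for every $t\ge0$, the maps $\beta\mapsto y(t,\beta)$ and $\beta\mapsto u(t,y(t,\beta))$ are Lipschitz continuous with constant $1+h$.
   Context: $\mathbb S=\mathbb R/\mathbb Z$. For $w$ on $\mathbb S$ write - $\overline w=\int_{\mathbb S}w$; - $\mathbb Pw=w-\overline w$; - $\partial_x^{-1}w(x)=\int_0^x\mathbb Pw$. Test functions $\psi\in C_0^\infty(\mathbb R^+;\mathcal D(\mathbb S))$ are smooth, 1-periodic in $x$, and compactly supported in $t\in[0,\infty)$. Also $$f(t)=\frac{1}{1-h}\int_{\mathbb S}(1-u_x^2)\,\partial_x^{-1}(u-uu_x^2)\,dy.$$ A function $u\in L^\infty(\mathbb R^+;H^1(\mathbb S))$ is a global admissible conservative weak solution if all of the following hold for all test functions $\psi$. (i) $$\iint(u\psi_{tx}+u^2u_x\psi_x)=\iint\big(u-uu_x^2-\overline{u-uu_x^2}\big)\psi+\int_{\mathbb S}u_{0x}\psi(0,\cdot).$$ (ii) $$\iint(u\psi_t-\tfrac13u^3\psi_x)=-\iint\big(\partial_x^{-1}(u-uu_x^2)-f(t)\big)\psi-\int_{\mathbb S}u_0\psi(0,\cdot).$$ (iii) $\int_{\mathbb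 S}u_x^2$ and $\int_{\mathbb S}(u-uu_x^2)$ are constant in time. (iv) $$\iint(u_x^2\psi_t-u^2u_x^2\psi_x)=-\iint\big((u^2)_x-2u_x\overline{u-uu_x^2}\big)\psi-\int_{\mathbb S}u_{0x}^2\psi(0,\cdot).$$ Here all double integrals are over $\mathbb R^+\times\mathbb S$. *)

(* Defs.v *)
From HB Require Import structures.
From mathcomp Require Import all_boot all_order all_algebra.
From mathcomp Require Import all_classical all_reals all_analysis.
Set Implicit Arguments. Unset Strict Implicit. Unset Printing Implicit Defensive.
Import Order.TTheory GRing.Theory Num.Theory.
Import numFieldNormedType.Exports.
Local Open Scope classical_set_scope.
Local Open Scope ring_scope.

Section Defs.
Variable R : realType.
Local Notation mu := (@lebesgue_measure R).

(* integral over the circle S = R/Z, i.e. over one period [0,1] *)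
Definition intCirc (w : R -> R) : R := \int[mu]_(x in `[0, 1]) w x.

Definition meanS (w : R -> R) : R := intCirc w.

Definition projP (w : R -> R) : R -> R := fun x => w x - meanS w.

Definition oint (a b : R) (f : R -> R) : R :=
  if a <= b then \int[mu]_(x in `[a, b]) f x
  else - \int[mu]_(x in `[b, a]) f x.

Definition invdx (w : R -> R) : R -> R := fun x => oint 0 x (projP w).

Definition dint (F : R -> R -> R) : R :=
  \int[mu]_(t in `[0, +oo[) (\int[mu]_(x in `[0, 1]) F t x).

Definition periodic1 (w : R -> R) : Prop := forall x, w (x + 1) = w x.

(* w is in H^1(S) with weak derivative wx: w, wx are 1-periodic,
   wx is measurable and square integrable on a period, and w is the
   (absolutely continuous) primitive of wx. *)
Definition H1S (w wx : R -> R) : Prop :=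
  [/\ periodic1 w, periodic1 wx,
      measurable_fun setT wx,
      mu.-integrable `[0, 1] (fun x => ((wx x) ^+ 2)%:E)
    & forall x, w x = w 0 + oint 0 x wx].

Definition pdt (f : R -> R -> R) : R -> R -> R :=
  fun t x => derive1 (fun s => f s x) t.
Definition pdx (f : R -> R -> R) : R -> R -> R :=
  fun t x => derive1 (fun s => f t s) x.

Fixpoint Cn (n : nat) (f : R -> R -> R) : Prop :=
  match n with
  | 0 => continuous (fun p : R * R => f p.1 p.2)
  | n'.+1 => [/\ continuous (fun p : R * R => f p.1 p.2),
                 (forall t x, derivable (fun s => f s x) t 1),
                 (forall t x, derivable (fun s => f t s) x 1),
                 Cn n' (pdt f) & Cn n' (pdx f)]
  end.

Definition smooth2 (f : R -> R -> R) : Prop := forall n, Cn n f.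

Definition test_fun (psi : R -> R -> R) : Prop :=
  [/\ smooth2 psi,
      (forall t, periodic1 (psi t))
    & exists T : R, forall t x, T <= t -> psi t x = 0].

Definition mbar (u ux : R -> R -> R) (t : R) : R :=
  meanS (fun x => u t x - u t x * (ux t x) ^+ 2).

Definition fcoef (h : R) (u ux : R -> R -> R) (t : R) : R :=
  (1 - h)^-1 * intCirc (fun y => (1 - (ux t y) ^+ 2) *
                     invdx (fun z => u t z - u t z * (ux t z) ^+ 2) y).

Definition weak_solution (u0 u0x : R -> R) (u ux : R -> R -> R) : Prop :=
  let h := intCirc (fun x => (u0x x) ^+ 2) in
  (
   (* u in L^oo(R^+; H^1(S)) *)
   (forall t, 0 <= t -> H1S (u t) (ux t)) /\
   (exists M : R, forall t, 0 <= t ->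
       intCirc (fun x => (u t x) ^+ 2) + intCirc (fun x => (ux t x) ^+ 2) <= M) /\
   measurable_fun setT (fun p : R * R => u p.1 p.2) /\
   measurable_fun setT (fun p : R * R => ux p.1 p.2) /\
   (forall psi, test_fun psi ->
      dint (fun t x => u t x * pdx (pdt psi) t x
                       + (u t x) ^+ 2 * ux t x * pdx psi t x)
      = dint (fun t x => (u t x - u t x * (ux t x) ^+ 2 - mbar u ux t) * psi t x)
        + intCirc (fun x => u0x x * psi 0 x)) /\
   (forall psi, test_fun psi ->
      dint (fun t x => u t x * pdt psi t x
                       - 3^-1 * (u t x) ^+ 3 * pdx psi t x)
      = - dint (fun t x =>
                  (invdx (fun z => u t z - u t z * (ux t z) ^+ 2) x
                   - fcoef h u ux t) * psi t x)
        - intCirc (fun x => u0 x * psi 0 x)) /\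
   (forall t s, 0 <= t -> 0 <= s ->
      intCirc (fun x => (ux t x) ^+ 2) = intCirc (fun x => (ux s x) ^+ 2)
      /\ intCirc (fun x => u t x - u t x * (ux t x) ^+ 2)
         = intCirc (fun x => u s x - u s x * (ux s x) ^+ 2)) /\
   (* (iv)  ((u^2)_x written as 2 u u_x) *)
   (forall psi, test_fun psi ->
      dint (fun t x => (ux t x) ^+ 2 * pdt psi t x
                       - (u t x) ^+ 2 * (ux t x) ^+ 2 * pdx psi t x)
      = - dint (fun t x => (2 * u t x * ux t x - 2 * ux t x * mbar u ux t)
                           * psi t x)
        - intCirc (fun x => (u0x x) ^+ 2 * psi 0 x))).

End Defs.

(* Main.v *)
Require Import Defs.
From HB Require Import structures.
From mathcomp Require Import all_boot all_order all_algebra.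
From mathcomp Require Import all_classical all_reals all_analysis.
From mathcomp Require Import measurable_realfun.
From mathcomp Require Import lra.
Import Order.TTheory GRing.Theory Num.Theory.
Import numFieldNormedType.Exports.
Local Open Scope ring_scope.

Section S.
Set Implicit Arguments. Unset Strict Implicit.
Local Open Scope classical_set_scope.
Context {R : realType}.
Local Notation mu := (@lebesgue_measure R).

Lemma shift_mf (c : R) : measurable_fun [set: measurableTypeR R] ((fun x => x + c) : measurableTypeR R -> measurableTypeR R).
Proof. by apply: measurable_funD. Qed.

Lemma shift_meas (c : R) (A : set R) : measurable A ->
  mu A = pushforward mu (fun x => x + c) A.
Proof.
move=> mA.
apply: (@lebesgue_measure_unique R (measure_function_pushforward__canonical__measure_function_Measure mu (shift_mf c))) => // _ [[a b]] _ <-.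
rewrite /= /pushforward.
have -> : (fun x => x + c) @^-1` `]a, b]%classic = `](a - c), (b - c)]%classic.
  by apply/seteqP; split => x /=; rewrite !in_itv /= ltrBlDr lerBrDr.
rewrite !lebesgue_measure_itv /= !lte_fin ltrD2r.
by case: ifP => // _; rewrite -EFinB; congr (_%:E); rewrite opprB addrA subrK.
Qed.

Lemma shift_integral (c : R) (A : set R) (f : R -> \bar R) :
  measurable A -> measurable_fun setT f -> (forall x, (0 <= f x)%E) ->
  (\int[mu]_(x in A) f x = \int[mu]_(x in (fun x => (x + c)%R) @^-1` A) f (x + c)%R)%E.
Proof.
move=> mA mf f0.
transitivity (\int[pushforward mu ((fun x => (x + c)%R) : measurableTypeR R -> measurableTypeR R)]_(x in A) f x)%E.
  apply: (eq_measure_integral (measure_function_pushforward__canonical__measure_function_Measure mu (shift_mf c))) => B mB _; exact: shift_meas.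
exact: (ge0_integral_pushforward (shift_mf c) mu mA (measurable_funS _ _ mf) (fun y _ => f0 y)).
Qed.

Lemma periodic_int (w : R -> R) : periodic1 w -> forall (m : int) x, w (x + m%:~R) = w x.
Proof.
move=> pw.
have pos : forall (n : nat) x, w (x + n%:R) = w x.
  elim=> [|n IH] x; first by rewrite addr0.
  by rewrite -natr1 addrA pw IH.
case=> n x; first exact: pos.
rewrite -(pos n.+1 (x + (Negz n)%:~R)); congr w.
by rewrite NegzE mulrNz -pmulrn subrK.
Qed.

Lemma unit_itv_int (g : R -> R) : periodic1 g -> measurable_fun setT g -> (forall x, 0 <= g x) ->
 forall m : int, (\int[mu]_(x in `[(m%:~R : R), (m%:~R + 1)%R]) (g x)%:E = \int[mu]_(x in `[0%R, 1%R]) (g x)%:E)%E.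
Proof.
move=> pg mg g0 m.
rewrite (shift_integral (m%:~R)) //; last first.
  exact: measurableT_comp.
rewrite (_ : _ @^-1` _ = `[0%R, 1%R]%classic); last first.
  apply/seteqP; split => x /=; rewrite !in_itv /= lerDr [_ + 1]addrC lerD2r //.
by apply: eq_integral => x _; rewrite periodic_int.
Qed.

Lemma fin_int_nk (g : R -> R) : periodic1 g -> measurable_fun setT g -> (forall x, 0 <= g x) ->
  (\int[mu]_(x in `[0%R, 1%R]) (g x)%:E < +oo)%E ->
  forall (n : int) (k : nat), (\int[mu]_(x in `[(n%:~R : R), (n%:~R + k%:R)%R]) (g x)%:E < +oo)%E.
Proof.
move=> pg mg g0 fin n; elim=> [|k IH].
  by rewrite addr0 set_itv1 integral_set1 ltry.
have -> : `[(n%:~R : R), n%:~R + k.+1%:R]%classic = `[n%:~R, n%:~R + k%:R]%classic `|` `](n%:~R + k%:R), (n%:~R + k%:R) + 1]%classic.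
  rewrite -(@natr1 R k) addrA; apply: itv_bndbnd_setU; rewrite bnd_simp.
    by rewrite lerDl.
  by rewrite lerDl.
rewrite ge0_integral_setU //; last 3 first.
- by apply/measurable_EFinP; exact: measurable_funS mg.
- by move=> x _; rewrite lee_fin.
- apply/disj_setPS => x [] /=; rewrite !in_itv /= => /andP[_ h1] /andP[h2 _].
  by move: (lt_le_trans h2 h1); rewrite ltxx.
rewrite lte_add_pinfty //.
apply: (le_lt_trans _ fin).
rewrite -(unit_itv_int pg mg g0 (n + k%:Z)) intrD.
apply: ge0_subset_integral => //.
- by apply/measurable_EFinP; exact: measurable_funS mg.
- by move=> x _; rewrite lee_fin.
- by apply: subset_itvr; rewrite bnd_simp.
Qed.

Lemma loc_int (g : R -> R) : periodic1 g -> measurable_fun setT g -> (forall x, 0 <= g x) ->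
  mu.-integrable `[0, 1] (EFin \o g) -> forall a b, mu.-integrable `[a, b] (EFin \o g).
Proof.
move=> pg mg g0 /integrableP[_ fin] a b.
have mG : forall D, measurable_fun D (EFin \o g).
  move=> D; apply: (@measurable_funS _ _ _ _ setT) => //; exact: measurableT_comp.
have mGa : forall D, measurable_fun D (fun x => `|(g x)%:E|%E).
  move=> D; apply: (@measurable_funS _ _ _ _ setT) => //.
  apply: measurableT_comp => //; exact: measurableT_comp.
have fin' : (\int[mu]_(x in `[0%R, 1%R]) (g x)%:E < +oo)%E.
  apply: le_lt_trans fin; apply: ge0_le_integral => //.
  all: try (by move=> x Hx; rewrite ?gee0_abs ?lee_fin //); try exact: mG; try exact: mGa.
set N := (Num.truncn (`|a| + `|b|)).+1.
have hN : `|a| + `|b| < N%:R by exact: truncnS_gt.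
apply: (@integrableS _ _ _ mu (`[((- N%:Z)%:~R : R), (- N%:Z)%:~R + (N + N)%:R] : set (measurableTypeR R))) => //.
- move=> x /=; rewrite !in_itv /= => /andP[ax xb].
  rewrite mulrNz -pmulrn natrD addrA addNr add0r.
  have ha : `|a| < N%:R by apply: le_lt_trans hN; rewrite lerDl.
  have hb : `|b| < N%:R by apply: le_lt_trans hN; rewrite lerDr.
  move: ha hb; rewrite !ltr_norml => /andP[ha _] /andP[_ hb].
  by rewrite (le_trans (ltW ha) ax) (le_trans xb (ltW hb)).
- apply/integrableP; split; first exact: mG.
  have H := fin_int_nk pg mg g0 fin' (- N%:Z) (N + N).
  apply: le_lt_trans H; apply: ge0_le_integral => //.
  all: try (by move=> x Hx; rewrite ?gee0_abs ?lee_fin //); try exact: mG; try exact: mGa.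
Qed.

Lemma oint_diff (f : R -> R) : (forall a b, mu.-integrable `[a, b] (EFin \o f)) ->
  forall a b, a <= b -> oint 0 b f - oint 0 a f = \int[mu]_(x in `[a, b]) f x.
Proof.
move=> fi a b hab; rewrite /oint.
have [ha|ha] := leP 0 a.
  rewrite (le_trans ha hab).
  rewrite (Rintegral_itvB (a := BLeft 0) (b := BRight b) (x := a)) ?bnd_simp //.
  by rewrite Rintegral_itv_obnd_cbnd //; apply: integrableS (fi a b) => //; apply: subset_itvr; rewrite bnd_simp.
have [hb|hb] := leP 0 b.
  rewrite opprK.
  have := Rintegral_itvB (a := BLeft a) (b := BRight b) (x := 0) (fi a b).
  rewrite !bnd_simp (ltW ha) hb => /(_ isT isT).
  rewrite Rintegral_itv_obnd_cbnd; last first.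
    apply: integrableS (fi a b) => // x /=; rewrite !in_itv /= => /andP[h1 ->].
    by rewrite andbT (le_trans (ltW ha) (ltW h1)).
  by move=> <-; rewrite subrK.
have := Rintegral_itvB (a := BLeft a) (b := BRight 0) (x := b) (fi a 0).
rewrite !bnd_simp hab (ltW hb) => /(_ isT isT).
rewrite Rintegral_itv_obnd_cbnd; last first.
  apply: integrableS (fi a 0) => // x /=; rewrite !in_itv /= => /andP[h1 ->].
  by rewrite andbT (le_trans hab (ltW h1)).
by move=> <-; rewrite opprB opprK subrK.
Qed.

Lemma cst_int (k a b : R) : mu.-integrable `[a, b] (EFin \o cst k).
Proof.
apply/integrableP; split; first by apply/measurable_EFinP; exact: measurable_cst.
rewrite (eq_integral (cst `|k|%:E)); last by move=> x _.
rewrite integral_cst //= lebesgue_measure_itv /=.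
by case: ifP => _; rewrite ?mule0 // -EFinB -EFinM ltry.
Qed.

Lemma sqr_bound (v : R) : `|v| <= 1 + v ^+ 2.
Proof.
have h1 := sqr_ge0 (`|v| - 1).
have h2 : `|v| ^+ 2 = v ^+ 2 by rewrite real_normK // num_real.
have h3 := normr_ge0 v.
rewrite -h2; move: h1 h3; set a := `|v|; move=> h1 h3.
nra.
Qed.
End S.

Theorem lemma5p4 (R : realType) (u0 u0x : R -> R) (u ux : R -> R -> R)
  (y : R -> R -> R) :
  H1S u0 u0x ->
  intCirc (fun x => (u0x x) ^+ 2) != 1 ->
  weak_solution u0 u0x u ux ->
  (forall t beta, 0 <= t ->
     y t beta + oint 0 (y t beta) (fun z => (ux t z) ^+ 2)
     = (1 + intCirc (fun x => (u0x x) ^+ 2)) * beta) ->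
  forall t, 0 <= t ->
    (forall b1 b2, `|y t b1 - y t b2|
                   <= (1 + intCirc (fun x => (u0x x) ^+ 2)) * `|b1 - b2|) /\
    (forall b1 b2, `|u t (y t b1) - u t (y t b2)|
                   <= (1 + intCirc (fun x => (u0x x) ^+ 2)) * `|b1 - b2|).
Proof.
move=> _ _ Hw Hy t ht.
have [pu pux mux iux urep] : H1S (u t) (ux t) by case: Hw => H _; exact: H.
move: Hy.
set h := intCirc (fun x => (u0x x) ^+ 2).
have h0 : 0 <= h by apply: Rintegral_ge0 => x _; exact: sqr_ge0.
have h1 : 0 <= 1 + h by rewrite addr_ge0.
move=> Hy.
set g := fun z => ux t z ^+ 2.
have mg : measurable_fun setT g by apply: measurable_funX.
have gi : forall a b, (@lebesgue_measure R).-integrable `[a, b] (EFin \o g).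
  apply: loc_int => //.
  - by move=> x; rewrite /g pux.
  - by move=> x; exact: sqr_ge0.
have g1i : forall a b, (@lebesgue_measure R).-integrable `[a, b] (EFin \o (fun x => 1 + g x)).
  move=> a b; apply: (eq_integrable _ _ _ _ (integrableD _ (cst_int 1 a b) (gi a b))) => //.
have vi : forall a b, (@lebesgue_measure R).-integrable `[a, b] (EFin \o ux t).
  move=> a b; apply: le_integrable (g1i a b) => //.
    by apply/measurable_EFinP; exact: measurable_funS mux.
  move=> x _ /=; rewrite lee_fin (@ger0_norm _ (1 + g x)) ?sqr_bound //.
  by rewrite addr_ge0 // sqr_ge0.
have claim : forall b1 b2, y t b2 <= y t b1 ->
  y t b1 - y t b2 <= (1 + h) * (b1 - b2) /\
  `|u t (y t b1) - u t (y t b2)| <= (1 + h) * (b1 - b2).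
  move=> b1 b2 hle.
  set y1 := y t b1; set y2 := y t b2.
  have eY : (y1 - y2) + \int[lebesgue_measure]_(x in `[y2, y1]) g x = (1 + h) * (b1 - b2).
    rewrite -(oint_diff gi hle) mulrBr -(Hy t b1 ht) -(Hy t b2 ht) -/y1 -/y2.
    by rewrite opprD !addrA; congr (_ + _); rewrite -!addrA; congr (_ + _); rewrite addrC.
  have Ig0 : 0 <= \int[lebesgue_measure]_(x in `[y2, y1]) g x.
    by apply: Rintegral_ge0 => x _; exact: sqr_ge0.
  have I1 : \int[lebesgue_measure]_(x in `[y2, y1]) (cst 1 x) = y1 - y2.
    rewrite Rintegral_cst // mul1r; have := @lebesgue_measure_itv R (Interval (BLeft y2) (BRight y1)); move=> /= ->; rewrite lte_fin.
    case: ltP => //= h'.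
    by apply/esym/eqP; rewrite subr_eq0 eq_le hle h'.
  split; first by rewrite -eY lerDl.
  rewrite (urep y1) (urep y2) opprD addrA [u t 0 + _]addrC addrK.
  rewrite (oint_diff vi hle).
  apply: (le_trans (le_normr_Rintegral _ (vi y2 y1))) => //.
  apply: (@le_trans _ _ (\int[lebesgue_measure]_(x in `[y2, y1]) (1 + g x))).
    apply: le_Rintegral => //.
    - exact: integrable_norm.
    - by move=> x _; exact: sqr_bound.
  rewrite RintegralD //; last exact: cst_int.
  by rewrite I1 eY.
split=> b1 b2.
  have [hle|hle] := leP (y t b2) (y t b1).
    have [c1 _] := claim b1 b2 hle.
    rewrite ger0_norm ?subr_ge0 //.
    by apply: (le_trans c1); rewrite ler_wpM2l // ler_norm.
  have [c1 _] := claim b2 b1 (ltW hle).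
  rewrite distrC ger0_norm ?subr_ge0 ?(ltW hle) //.
  by apply: (le_trans c1); rewrite ler_wpM2l // distrC ler_norm.
have [hle|hle] := leP (y t b2) (y t b1).
  have [_ c2] := claim b1 b2 hle.
  by apply: (le_trans c2); rewrite ler_wpM2l // ler_norm.
have [_ c2] := claim b2 b1 (ltW hle).
by rewrite distrC; apply: (le_trans c2); rewrite ler_wpM2l // distrC ?ler_norm.
Qed.
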